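(* $\mathrm{cov}(\mathcal M)\leq\mathfrak{ss}_c$ and dually $\mathfrak{ss}_c^\perp\leq\mathrm{non}(\mathcal M)$.
   Context: Let $\mathfrak S$ be the set of all sequences $\mathbf a=\langle a_i:i\in\omega\rangle$ of rational numbers with $a_i\to 0$. Let $[\omega]^\omega_\omega$ denote the set of infinite coinfinite subsets of $\omega$. For infinite $X\subseteq\omega$ with increasing enumeration $\langle i_n\rangle$ put $\mathbf a\restriction X=\langle a_{i_n}:n\in\omega\rangle$ and write $\sum_X\mathbf a$ for $\sum_n a_{i_n}$. A series is convergent if its partial sums converge to a real number; it is conditional if $\sum_{\{i:a_i>0\}}\mathbf a=\infty$ and $\sum_{\{i:a_i<0\}}\mathbf a=-\infty$; conditionally convergent if both. Let $\mathfrak S_c$, $\mathfrak S_{cc}$ be the sets of $\mathbf a\in\mathfrak S$ whose series is convergent, resp. conditionally convergent. $\mathfrak{ss}_c$ is the least cardinality of a family $\mathcal X\subseteq[\omega]^\omega_\omega$ such that for every $\mathbf a\in\mathfrak S_{cc}$ there is $X\in\mathcal X$ with $\sum_X\mathbf a$ convergent; $\mathfrak{ss}_c^\perp$ is the least cardinality of a family $\mathcal A\subseteq\mathfrak S_{cc}$ such that no $X\in[\omega]^\omega_\omega$ makes $\sum_X\mathbf a$ convergent for all $\mathbf a\in\mathcal A$. $\mathrm{cov}(\mathcal M)$ and $\mathrm{non}(\mathcal M)$ are the covering and uniformity numbers of the meagre ideal. *)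

(* Defs.v *)
From Stdlib Require Import Reals QArith Qreals List.
Open Scope R_scope.

Definition infinite_set (X : nat -> Prop) : Prop :=
  forall n : nat, exists m : nat, (n <= m)%nat /\ X m.

Definition inf_coinf (X : nat -> Prop) : Prop :=
  infinite_set X /\ infinite_set (fun i => ~ X i).

Definition enumerates (X : nat -> Prop) (e : nat -> nat) : Prop :=
  (forall n, (e n < e (S n))%nat) /\ (forall i, X i <-> exists n, e n = i).

Definition psum (b : nat -> R) (N : nat) : R := sum_f_R0 b N.

Definition series_conv (b : nat -> R) : Prop :=
  exists l : R, Un_cv (psum b) l.

Definition qseq (a : nat -> Q) : nat -> R := fun i => Q2R (a i).

Definition sum_on_conv (a : nat -> Q) (X : nat -> Prop) : Prop :=
  exists e, enumerates X e /\ series_conv (fun n => qseq a (e n)).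

Definition sum_on_pinfty (a : nat -> Q) (X : nat -> Prop) : Prop :=
  exists e, enumerates X e /\ cv_infty (psum (fun n => qseq a (e n))).

Definition sum_on_minfty (a : nat -> Q) (X : nat -> Prop) : Prop :=
  exists e, enumerates X e /\
    cv_infty (fun N => - psum (fun n => qseq a (e n)) N).

Definition in_S (a : nat -> Q) : Prop := Un_cv (qseq a) 0.

Definition conditional (a : nat -> Q) : Prop :=
  sum_on_pinfty a (fun i => Qlt 0 (a i)) /\
  sum_on_minfty a (fun i => Qlt (a i) 0).

Definition in_Scc (a : nat -> Q) : Prop :=
  in_S a /\ series_conv (qseq a) /\ conditional a.

Definition cantor := nat -> bool.

Definition extends (x : cantor) (s : list bool) : Prop :=
  forall i, (i < length s)%nat -> x i = nth i s false.

Definition nowhere_dense (N : cantor -> Prop) : Prop :=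
  forall s : list bool, exists t : list bool,
    forall x, extends x (s ++ t) -> ~ N x.

Definition meagre (M : cantor -> Prop) : Prop :=
  exists Ns : nat -> cantor -> Prop,
    (forall n, nowhere_dense (Ns n)) /\ (forall x, M x -> exists n, Ns n x).

(* Main.v *)
Require Import Defs.
From Stdlib Require Import Reals QArith Qreals List Lia Lra Classical ClassicalEpsilon FunctionalExtensionality.
Open Scope R_scope.

Ltac dm a := pose proof (Nat.div_mod_eq a 2); pose proof (Nat.mod_upper_bound a 2 ltac:(lia)).

Fixpoint cnt (x : cantor) (i : nat) : nat :=
  match i with O => O | S j => (cnt x j + (if x j then 1 else 0))%nat end.

Lemma cnt_mono x a b : (a <= b)%nat -> (cnt x a <= cnt x b)%nat.
Proof. induction 1; simpl; [lia| destruct (x m); lia]. Qed.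

Lemma cnt_S_true x i : x i = true -> cnt x (S i) = S (cnt x i).
Proof. intros H; simpl; rewrite H; lia. Qed.

Lemma cnt_lt x i j : x i = true -> (i < j)%nat -> (cnt x i < cnt x j)%nat.
Proof. intros H Hij. pose proof (cnt_mono x (S i) j Hij). rewrite cnt_S_true in H0 by auto. lia. Qed.

Lemma cnt_inj x i j : x i = true -> x j = true -> cnt x i = cnt x j -> i = j.
Proof.
  intros Hi Hj Hc. destruct (Nat.lt_trichotomy i j) as [H|[H|H]]; auto.
  - pose proof (cnt_lt x i j Hi H); lia.
  - pose proof (cnt_lt x j i Hj H); lia.
Qed.

Lemma cnt_agree x y n : (forall i, (i < n)%nat -> x i = y i) -> cnt x n = cnt y n.
Proof. induction n; simpl; intros H; auto. rewrite IHn by (intros; apply H; lia). rewrite (H n) by lia. auto. Qed.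

Lemma cnt_const x a b : (a <= b)%nat -> (forall i, (a <= i < b)%nat -> x i = false) -> cnt x b = cnt x a.
Proof.
  induction 1; intros Hf; auto. simpl. rewrite (Hf m) by lia. rewrite IHle by (intros; apply Hf; lia). lia.
Qed.

Definition infones (x : cantor) := forall n, exists m, (n <= m)%nat /\ x m = true.

Lemma cnt_unbounded x : infones x -> forall k, exists i, (k < cnt x i)%nat.
Proof.
  intros H. induction k.
  - destruct (H O) as [m [_ Hm]]; exists (S m); rewrite cnt_S_true; auto; lia.
  - destruct IHk as [i Hi]; destruct (H i) as [m [Hm1 Hm2]]; exists (S m).
    rewrite cnt_S_true by auto. pose proof (cnt_mono x i m Hm1); lia.
Qed.

Lemma cnt_hit x : forall i k, (k < cnt x i)%nat -> exists j, (j < i)%nat /\ x j = true /\ cnt x j = k.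
Proof.
  induction i; simpl; intros k Hk. lia.
  destruct (x i) eqn:E.
  - destruct (Nat.eq_dec k (cnt x i)) as [->|Hn].
    + exists i; auto.
    + destruct (IHi k) as [j [? ?]]. lia. exists j; split; auto; lia.
  - destruct (IHi k) as [j [? ?]]. lia. exists j; split; auto; lia.
Qed.

Lemma exists_oneat x : infones x -> forall k, exists i, x i = true /\ cnt x i = k.
Proof.
  intros H k. destruct (cnt_unbounded x H k) as [i Hi].
  destruct (cnt_hit x i k Hi) as [j [_ Hj]]; eauto.
Qed.

Definition par (n : nat) : bool := Nat.eqb (n mod 2) 0.

Lemma par_S K : par (S K) = negb (par K).
Proof.
  unfold par; dm K; dm (S K).
  destruct (Nat.eqb_spec (K mod 2) 0), (Nat.eqb_spec (S K mod 2) 0); simpl; auto; exfalso; lia.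
Qed.

Lemma par_true n : par n = true -> n = (2 * (n / 2))%nat.
Proof. unfold par; intros H; apply Nat.eqb_eq in H; dm n; lia. Qed.

Lemma par_2 n : par (2 * n) = true /\ (2 * n / 2 = n)%nat.
Proof. unfold par. dm (2*n)%nat. split. apply Nat.eqb_eq; lia. lia. Qed.

Lemma par_2S n : par (S (2 * n)) = false /\ (S (2 * n) / 2 = n)%nat.
Proof. unfold par. dm (S (2*n))%nat. split. apply Nat.eqb_neq; lia. lia. Qed.

Definition cr (m : nat) : R := / INR (S m).
Definition cq (m : nat) : Q := Qmake 1 (Pos.of_succ_nat m).

Lemma Q2R_cq m : Q2R (cq m) = cr m.
Proof.
  unfold Q2R, cq, cr; cbn [Qnum Qden]. rewrite Znat.Zpos_P_of_succ_nat, <- Znat.Nat2Z.inj_succ, <- INR_IZR_INZ. ring.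
Qed.

Lemma Q2R_0 : Q2R 0 = 0.
Proof. unfold Q2R; simpl; ring. Qed.

Lemma cr_pos m : 0 < cr m.
Proof. unfold cr; apply Rinv_0_lt_compat, lt_0_INR; lia. Qed.

Lemma cr_small eps : 0 < eps -> exists M, forall m, (M <= m)%nat -> cr m < eps.
Proof.
  intros He. destruct (archimed_cor1 eps He) as [N [HN HN0]]. exists N. intros m Hm.
  unfold cr. eapply Rle_lt_trans; [|apply HN]. apply Rinv_le_contravar. apply lt_0_INR; lia. apply le_INR; lia.
Qed.

Definition ev (x : cantor) (i : nat) : Q :=
  if x i then (if par (cnt x i) then cq (cnt x i / 2) else Qopp (cq (cnt x i / 2))) else 0%Q.
Definition evR (x : cantor) (i : nat) : R :=
  if x i then (if par (cnt x i) then cr (cnt x i / 2) else - cr (cnt x i / 2)) else 0.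

Lemma qseq_ev x : qseq (ev x) = evR x.
Proof.
  apply functional_extensionality; intro i.
  unfold qseq, ev, evR; destruct (x i), (par (cnt x i)); rewrite ?Q2R_opp, ?Q2R_cq, ?Q2R_0; auto.
Qed.

Definition Hs (n : nat) : R := sum_f_R0 cr n.

Lemma H_mono a b : (a <= b)%nat -> Hs a <= Hs b.
Proof. induction 1. lra. unfold Hs in *; simpl. pose proof (cr_pos (S m)); lra. Qed.

Lemma H_block n : Hs (2 * n + 1) - Hs n >= 1/2.
Proof.
  assert (H0 : forall j, (j <= n + 1)%nat -> Hs (n + j) - Hs n >= INR j * cr (2 * n + 1)).
  { induction j; intros Hj. rewrite Nat.add_0_r; simpl; lra.
    rewrite Nat.add_succ_r. unfold Hs in *. simpl sum_f_R0.
    assert (cr (S (n + j)) >= cr (2 * n + 1)).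
    { unfold cr. apply Rle_ge, Rinv_le_contravar. apply lt_0_INR; lia. apply le_INR; lia. }
    rewrite S_INR. specialize (IHj ltac:(lia)). nra. }
  specialize (H0 (n + 1)%nat ltac:(lia)). replace (n + (n + 1))%nat with (2 * n + 1)%nat in H0 by lia.
  unfold cr in H0. replace (S (2 * n + 1)) with (2 * (n + 1))%nat in H0 by lia.
  rewrite mult_INR in H0. assert (Ha : INR (n + 1) <> 0) by (apply not_0_INR; lia).
  replace (INR 2) with 2 in H0 by (simpl; lra). revert H0 Ha. generalize (INR (n + 1)). intros a H0 Ha.
  replace (a * / (2 * a)) with (1/2) in H0 by (field; auto). lra.
Qed.

Fixpoint gg (k : nat) : nat := match k with O => O | S k => (2 * gg k + 1)%nat end.

Lemma H_gg k : Hs (gg k) >= INR k / 2.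
Proof.
  induction k. simpl. unfold Hs; simpl. pose proof (cr_pos 0); lra.
  change (gg (S k)) with (2 * gg k + 1)%nat. pose proof (H_block (gg k)). rewrite S_INR. lra.
Qed.

Lemma H_inf : cv_infty Hs.
Proof.
  intros M. destruct (INR_archimed (1/2) M) as [k Hk]. lra.
  exists (gg k). intros n Hn. pose proof (H_mono _ _ Hn). pose proof (H_gg k). lra.
Qed.

Lemma psum_tail f a b : (a < b)%nat -> (forall j, (a < j <= b)%nat -> 0 <= f j) -> psum f b - psum f a >= f b.
Proof.
  induction 1; intros Hf; unfold psum in *; simpl.
  - lra.
  - specialize (IHle ltac:(intros; apply Hf; lia)). pose proof (Hf m ltac:(lia)). lra.
Qed.

Lemma sum_opp f N : sum_f_R0 (fun n => - f n) N = - sum_f_R0 f N.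
Proof. induction N; simpl; try rewrite IHN; ring. Qed.

Lemma psum_ev x N : psum (evR x) N = if par (cnt x (S N)) then 0 else cr (cnt x (S N) / 2).
Proof.
  induction N.
  - unfold psum, evR; simpl. destruct (x 0%nat); simpl; reflexivity.
  - unfold psum in *. simpl sum_f_R0. rewrite IHN. unfold evR.
    change (cnt x (S (S N))) with (cnt x (S N) + (if x (S N) then 1 else 0))%nat.
    destruct (x (S N)).
    + replace (cnt x (S N) + 1)%nat with (S (cnt x (S N))) by lia. rewrite par_S.
      destruct (par (cnt x (S N))) eqn:E; cbn [negb].
      * remember (cnt x (S N)) as c. apply par_true in E. rewrite E. set (j := (c / 2)%nat).
        destruct (par_2 j) as [_ E2]. destruct (par_2S j) as [_ E3].
        rewrite E2, E3. ring.
      * ring.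
    + rewrite Nat.add_0_r. ring.
Qed.

Lemma cnt_large x : infones x -> forall M, exists i0, forall i, (i0 <= i)%nat -> (M <= cnt x i / 2)%nat.
Proof.
  intros Hx M. destruct (cnt_unbounded x Hx (2 * M)%nat) as [i0 Hi0]. exists i0. intros i Hi.
  pose proof (cnt_mono x _ _ Hi). dm (cnt x i). lia.
Qed.

Lemma evR_abs x i : Rabs (evR x i) <= cr (cnt x i / 2).
Proof.
  pose proof (cr_pos (cnt x i / 2)).
  unfold evR. destruct (x i), (par (cnt x i)).
  - rewrite Rabs_right; lra.
  - rewrite Rabs_left; lra.
  - rewrite Rabs_R0; lra.
  - rewrite Rabs_R0; lra.
Qed.

Lemma ev_inS x : infones x -> in_S (ev x).
Proof.
  intros Hx eps He. rewrite qseq_ev. destruct (cr_small eps He) as [M HM].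
  destruct (cnt_large x Hx M) as [i0 Hi0]. exists i0. intros n Hn.
  unfold Rdist. rewrite Rminus_0_r. eapply Rle_lt_trans. apply evR_abs. apply HM, Hi0. lia.
Qed.

Lemma ev_conv x : infones x -> series_conv (qseq (ev x)).
Proof.
  intros Hx. exists 0. rewrite qseq_ev. intros eps He. destruct (cr_small eps He) as [M HM].
  destruct (cnt_large x Hx M) as [i0 Hi0]. exists i0. intros n Hn.
  unfold Rdist. rewrite Rminus_0_r, psum_ev. destruct (par (cnt x (S n))).
  - rewrite Rabs_R0; lra.
  - rewrite Rabs_right. apply HM, Hi0. lia. pose proof (cr_pos (cnt x (S n) / 2)); lra.
Qed.

Lemma oneat_sig x (Hx : infones x) k : {i | x i = true /\ cnt x i = k}.
Proof. apply constructive_indefinite_description. apply exists_oneat; auto. Qed.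

Lemma evR_pos_iff x i : 0 < evR x i <-> x i = true /\ par (cnt x i) = true.
Proof.
  pose proof (cr_pos (cnt x i / 2)).
  unfold evR. destruct (x i), (par (cnt x i)); split; intros; try lra; try tauto; try (destruct H0; discriminate).
Qed.

Lemma evR_neg_iff x i : evR x i < 0 <-> x i = true /\ par (cnt x i) = false.
Proof.
  pose proof (cr_pos (cnt x i / 2)).
  unfold evR. destruct (x i), (par (cnt x i)); split; intros; try lra; try tauto; try (destruct H0; discriminate).
Qed.

Lemma Qlt0_iff q : Qlt 0 q <-> 0 < Q2R q.
Proof. split; intros. rewrite <- Q2R_0. apply Qlt_Rlt; auto. apply Rlt_Qlt. rewrite Q2R_0; auto. Qed.
Lemma Qlt0_iff' q : Qlt q 0 <-> Q2R q < 0.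
Proof. split; intros. rewrite <- Q2R_0. apply Qlt_Rlt; auto. apply Rlt_Qlt. rewrite Q2R_0; auto. Qed.

Lemma strict_mono_lt (e : nat -> nat) : (forall n, (e n < e (S n))%nat) -> forall m n, (m < n)%nat -> (e m < e n)%nat.
Proof.
  intros He m n Hmn. induction Hmn. apply He. specialize (He m0). lia.
Qed.

Lemma strict_mono_le (e : nat -> nat) : (forall n, (e n < e (S n))%nat) -> forall m n, (e m <= e n)%nat -> (m <= n)%nat.
Proof.
  intros He m n H. destruct (Nat.le_gt_cases m n); auto. pose proof (strict_mono_lt e He n m H0). lia.
Qed.

Lemma ev_pinfty x : infones x -> sum_on_pinfty (ev x) (fun i => Qlt 0 (ev x i)).
Proof.
  intros Hx. set (e := fun n => proj1_sig (oneat_sig x Hx (2 * n))).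
  assert (He : forall n, x (e n) = true /\ cnt x (e n) = (2 * n)%nat).
  { intros n; unfold e; destruct (oneat_sig x Hx (2 * n)); auto. }
  exists e. split. split.
  - intros n. destruct (He n), (He (S n)). destruct (Nat.le_gt_cases (e (S n)) (e n)); auto.
    pose proof (cnt_mono x _ _ H3). lia.
  - intros i. rewrite Qlt0_iff. change (Q2R (ev x i)) with (qseq (ev x) i). rewrite qseq_ev, evR_pos_iff.
    split.
    + intros [H1 H2]. exists (cnt x i / 2)%nat. apply par_true in H2. destruct (He (cnt x i / 2)%nat).
      apply cnt_inj with x; auto. lia.
    + intros [n <-]. destruct (He n) as [H1 H2]. rewrite H2. split; auto. apply par_2.
  - replace (fun n => qseq (ev x) (e n)) with cr. apply H_inf.
    apply functional_extensionality; intros n. rewrite qseq_ev. unfold evR. destruct (He n) as [H1 H2].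
    rewrite H1, H2. destruct (par_2 n) as [-> ->]. auto.
Qed.

Lemma ev_minfty x : infones x -> sum_on_minfty (ev x) (fun i => Qlt (ev x i) 0).
Proof.
  intros Hx. set (e := fun n => proj1_sig (oneat_sig x Hx (S (2 * n)))).
  assert (He : forall n, x (e n) = true /\ cnt x (e n) = S (2 * n)).
  { intros n; unfold e; destruct (oneat_sig x Hx (S (2 * n))); auto. }
  exists e. split. split.
  - intros n. destruct (He n), (He (S n)). destruct (Nat.le_gt_cases (e (S n)) (e n)); auto.
    pose proof (cnt_mono x _ _ H3). lia.
  - intros i. rewrite Qlt0_iff'. change (Q2R (ev x i)) with (qseq (ev x) i). rewrite qseq_ev, evR_neg_iff.
    split.
    + intros [H1 H2]. exists (cnt x i / 2)%nat. destruct (He (cnt x i / 2)%nat).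
      apply cnt_inj with x; auto. rewrite H0. unfold par in H2. apply Nat.eqb_neq in H2. dm (cnt x i). lia.
    + intros [n <-]. destruct (He n) as [H1 H2]. rewrite H2. split; auto. apply par_2S.
  - replace (fun N => - psum (fun n => qseq (ev x) (e n)) N) with Hs. apply H_inf.
    apply functional_extensionality; intros N. unfold psum, Hs.
    replace (fun n => qseq (ev x) (e n)) with (fun n => - cr n). rewrite sum_opp. ring.
    apply functional_extensionality; intros n. rewrite qseq_ev. unfold evR. destruct (He n) as [H1 H2].
    rewrite H1, H2. destruct (par_2S n) as [-> ->]. auto.
Qed.

Lemma ev_Scc x : infones x -> in_Scc (ev x).
Proof.
  intros Hx. split. apply ev_inS; auto. split. apply ev_conv; auto. split. apply ev_pinfty; auto. apply ev_minfty; auto.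
Qed.

Lemma extends_app x s t : extends x (s ++ t) -> extends x s.
Proof.
  intros H i Hi. rewrite H. apply app_nth1; auto. rewrite length_app; lia.
Qed.

Lemma nd_union (A B : cantor -> Prop) : nowhere_dense A -> nowhere_dense B -> nowhere_dense (fun x => A x \/ B x).
Proof.
  intros HA HB s. destruct (HA s) as [t1 H1]. destruct (HB (s ++ t1)) as [t2 H2].
  exists (t1 ++ t2). intros x Hx [Ha|Hb].
  - apply (H1 x); auto. rewrite app_assoc in Hx. eapply extends_app; eauto.
  - apply (H2 x); auto. rewrite <- app_assoc; auto.
Qed.

Lemma nd_witness (N : cantor -> Prop) :
  (forall s, exists (z : cantor) L, (forall i, (i < length s)%nat -> z i = nth i s false) /\ (length s <= L)%nat /\
     forall x, (forall i, (i < L)%nat -> x i = z i) -> ~ N x) -> nowhere_dense N.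
Proof.
  intros H s. destruct (H s) as [z [L [H1 [H2 H3]]]].
  exists (map z (seq (length s) (L - length s))). intros x Hx. apply H3. intros i Hi.
  rewrite Hx. 2:{ rewrite length_app, length_map, length_seq. lia. }
  destruct (Nat.lt_ge_cases i (length s)).
  - rewrite app_nth1 by auto. symmetry; auto.
  - rewrite app_nth2 by auto. rewrite nth_indep with (d' := z 0%nat). rewrite map_nth, seq_nth. f_equal; lia. lia.
    rewrite length_map, length_seq. lia.
Qed.

Definition En (n : nat) (x : cantor) : Prop := forall m, (n <= m)%nat -> x m = false.

Lemma En_nd n : nowhere_dense (En n).
Proof.
  apply nd_witness. intros s.
  exists (fun i => if Nat.ltb i (length s) then nth i s false else true), (S (length s + n)).
  split; [|split].
  - intros i Hi. apply Nat.ltb_lt in Hi. rewrite Hi; auto.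
  - lia.
  - intros x Hx HE. specialize (HE (length s + n)%nat ltac:(lia)). rewrite Hx in HE by lia.
    destruct (Nat.ltb_spec (length s + n) (length s)). lia. discriminate.
Qed.

Fixpoint posf (nx : bool -> nat -> nat) (k0 r0 : nat) (l : nat) : nat :=
  match l with
  | O => nx (par (k0 + 0)) r0
  | S l' => nx (par (k0 + S l')) (S (posf nx k0 r0 l'))
  end.

Definition Nc (X : nat -> Prop) (p : nat) (x : cantor) : Prop :=
  exists e, enumerates X e /\ forall m1 m2, (p <= e m1)%nat -> (p <= e m2)%nat ->
    Rabs (psum (fun n => evR x (e n)) m1 - psum (fun n => evR x (e n)) m2) < 1/2.

Section Pos.
Variables (X : nat -> Prop) (nx : bool -> nat -> nat) (k0 r0 : nat).
Hypothesis Hnx : forall b q, (q <= nx b q)%nat /\ (if b then X (nx b q) else ~ X (nx b q)).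

Lemma pos0 : (r0 <= posf nx k0 r0 0)%nat.
Proof. simpl. apply Hnx. Qed.
Lemma posS l : (posf nx k0 r0 l < posf nx k0 r0 (S l))%nat.
Proof. simpl. pose proof (proj1 (Hnx (par (k0 + S l)) (S (posf nx k0 r0 l)))). lia. Qed.
Lemma pos_lt l l' : (l < l')%nat -> (posf nx k0 r0 l < posf nx k0 r0 l')%nat.
Proof. induction 1. apply posS. pose proof (posS m). lia. Qed.
Lemma pos_le l l' : (l <= l')%nat -> (posf nx k0 r0 l <= posf nx k0 r0 l')%nat.
Proof. intros H. destruct (Nat.eq_dec l l'). subst; lia. pose proof (pos_lt l l'). lia. Qed.
Lemma posX l : X (posf nx k0 r0 l) <-> par (k0 + l) = true.
Proof.
  assert (E : posf nx k0 r0 l = nx (par (k0 + l)) (match l with O => r0 | S l' => S (posf nx k0 r0 l') end)).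
  { destruct l; reflexivity. }
  rewrite E. pose proof (proj2 (Hnx (par (k0 + l)) (match l with O => r0 | S l' => S (posf nx k0 r0 l') end))).
  destruct (par (k0 + l)); split; auto; intros; try discriminate; tauto.
Qed.
End Pos.

Open Scope nat_scope.
Lemma Nc_nd X p : inf_coinf X -> nowhere_dense (Nc X p).
Proof.
  intros [HX1 HX2].
  assert (Hnx0 : forall (b : bool) q, {r | (q <= r)%nat /\ (if b then X r else ~ X r)}).
  { intros b q. apply constructive_indefinite_description.
    destruct b; [destruct (HX1 q) as [m [? ?]] | destruct (HX2 q) as [m [? ?]]]; exists m; auto. }
  set (nx := fun b q => proj1_sig (Hnx0 b q)).
  assert (Hnx : forall b q, (q <= nx b q)%nat /\ (if b then X (nx b q) else ~ X (nx b q))).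
  { intros; unfold nx; destruct (Hnx0 b q); auto. }
  clearbody nx.
  apply nd_witness. intros s.
  set (r0 := Nat.max (length s) p).
  set (z0 := fun i => if Nat.ltb i (length s) then nth i s false else false).
  set (k0 := cnt z0 r0).
  set (l0 := if par k0 then 0%nat else 1%nat).
  set (h := ((k0 + l0) / 2)%nat).
  set (K := (l0 + 2 * (h + 1))%nat).
  set (pos := posf nx k0 r0).
  set (z := fun i => if Nat.ltb i r0 then z0 i else existsb (fun l => Nat.eqb (pos l) i) (seq 0 (S K))).
  exists z, (S (pos K)).
  pose proof (pos0 X nx k0 r0 Hnx) as Hpos0. fold pos in Hpos0.
  pose proof (posS X nx k0 r0 Hnx) as HposS. fold pos in HposS.
  pose proof (pos_lt X nx k0 r0 Hnx) as Hlt. fold pos in Hlt.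
  pose proof (pos_le X nx k0 r0 Hnx) as Hle. fold pos in Hle.
  pose proof (posX X nx k0 r0 Hnx) as HposX. fold pos in HposX.
  assert (Hz : forall i, (r0 <= i)%nat -> (z i = true <-> exists l, (l <= K)%nat /\ pos l = i)).
  { intros i Hi. unfold z. destruct (Nat.ltb_spec i r0). lia. rewrite existsb_exists. split.
    - intros [l [Hin Heq]]. apply in_seq in Hin. apply Nat.eqb_eq in Heq. exists l; split; auto; lia.
    - intros [l [Hl Heq]]. exists l. split. apply in_seq; lia. apply Nat.eqb_eq; auto. }
  assert (Hzpos : forall l, (l <= K)%nat -> z (pos l) = true).
  { intros l Hl. apply Hz. pose proof (Hle 0%nat l ltac:(lia)). lia. exists l; auto. }
  assert (Hk0 : cnt z r0 = k0).
  { apply cnt_agree. intros i Hi. unfold z. destruct (Nat.ltb_spec i r0); auto; lia. }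
  assert (Hcnt : forall l, (l <= K)%nat -> cnt z (pos l) = (k0 + l)%nat).
  { induction l; intros Hl.
    - rewrite cnt_const with (a := r0); auto. lia. intros i Hi. destruct (z i) eqn:E; auto.
      apply Hz in E as [l' [_ Hl']]; [|lia]. pose proof (Hle 0%nat l' ltac:(lia)). lia.
    - rewrite cnt_const with (a := S (pos l)). rewrite cnt_S_true by (apply Hzpos; lia).
      rewrite IHl by lia. lia. apply HposS.
      intros i Hi. destruct (z i) eqn:E; auto.
      apply Hz in E as [l' [_ Hl']]; [|pose proof (Hle 0%nat l ltac:(lia)); lia].
      destruct (Nat.le_gt_cases l' l). pose proof (Hle l' l H). lia.
      pose proof (Hle (S l) l' ltac:(lia)). lia. }
  assert (Hnonneg : forall i, (r0 <= i)%nat -> X i -> (0 <= evR z i)%R).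
  { intros i Hi HXi. unfold evR. destruct (z i) eqn:E. 2: (apply Rle_refl).
    apply Hz in E as [l [Hl <-]]; auto. rewrite Hcnt by auto.
    assert (par (k0 + l) = true) by (apply HposX; auto). rewrite H. left; apply cr_pos. }
  assert (Hpar0 : par (k0 + l0) = true).
  { unfold l0; destruct (par k0) eqn:E. rewrite Nat.add_0_r; auto.
    rewrite Nat.add_1_r, par_S, E; auto. }
  assert (Hy : forall w, (l0 + 2 * w <= K)%nat -> evR z (pos (l0 + 2 * w)) = cr (h + w) /\ X (pos (l0 + 2 * w))).
  { intros w Hw. assert (Eq : (k0 + (l0 + 2 * w) = 2 * (h + w))%nat).
    { pose proof (par_true _ Hpar0). unfold h. lia. }
    unfold evR. rewrite Hzpos, Hcnt, Eq by auto. destruct (par_2 (h + w)) as [E1 E2]. rewrite E1, E2.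
    split; auto. apply HposX. rewrite Eq; auto. }
  split; [|split].
  - intros i Hi. unfold z. destruct (Nat.ltb_spec i r0). unfold z0. destruct (Nat.ltb_spec i (length s)); auto; lia. lia.
  - pose proof (Hle 0%nat K ltac:(lia)). lia.
  - intros x Hx [e [[Hmono Hen] Hc]].
    assert (Hagree : forall i, (i <= pos K)%nat -> evR x i = evR z i).
    { intros i Hi. unfold evR. rewrite (Hx i) by lia. rewrite (cnt_agree x z i) by (intros; apply Hx; lia). auto. }
    set (f := fun n => evR x (e n)).
    destruct (Hy 0%nat ltac:(lia)) as [_ HX0]. replace (l0 + 2 * 0)%nat with l0 in HX0 by lia.
    destruct (proj1 (Hen (pos l0)) HX0) as [n0 Hn0].
    assert (Hind : forall w, (w <= h + 1)%nat -> exists n, e n = pos (l0 + 2 * w) /\ (psum f n - psum f n0 >= Hs (h + w) - Hs h)%R).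
    { induction w; intros Hw.
      - exists n0. replace (l0 + 2 * 0)%nat with l0 by lia. rewrite Nat.add_0_r. split; auto. lra.
      - destruct IHw as [n [Hn Hsum]]. lia.
        destruct (Hy (S w) ltac:(unfold K; lia)) as [Hv HXw].
        destruct (proj1 (Hen _) HXw) as [n' Hn'].
        assert (Hpp : (pos (l0 + 2 * w) < pos (l0 + 2 * S w))%nat) by (apply Hlt; lia).
        assert (Hnn : (n < n')%nat).
        { destruct (Nat.le_gt_cases n' n); auto. destruct (Nat.eq_dec n' n). subst; lia.
          pose proof (strict_mono_lt e Hmono n' n ltac:(lia)). lia. }
        assert (HKw : (pos (l0 + 2 * S w) <= pos K)%nat) by (apply Hle; unfold K; lia).
        pose proof (psum_tail f n n' Hnn) as Ht.
        assert (Hf' : f n' = cr (h + S w)).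
        { unfold f. rewrite Hn', Hagree by lia. apply Hv. }
        exists n'. split; auto.
        assert (Hs (h + S w) = Hs (h + w) + cr (h + S w))%R.
        { rewrite Nat.add_succ_r. reflexivity. }
        assert (psum f n' - psum f n >= f n')%R.
        { apply Ht. intros j Hj. unfold f.
          assert (e n < e j)%nat by (apply strict_mono_lt; auto; lia).
          assert (e j <= e n')%nat.
          { destruct (Nat.eq_dec j n'). subst; lia. pose proof (strict_mono_lt e Hmono j n' ltac:(lia)). lia. }
          rewrite Hagree by lia. apply Hnonneg.
          pose proof (Hle 0%nat (l0 + 2 * w)%nat ltac:(lia)). lia.
          apply Hen. eauto. }
        lra. }
    destruct (Hind (h + 1)%nat ltac:(lia)) as [n [Hn Hsum]].
    assert (Hb := H_block h). replace (2 * h + 1)%nat with (h + (h + 1))%nat in Hb by lia.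
    assert (HpK : (p <= e n)%nat).
    { rewrite Hn. pose proof (Hle 0%nat (l0 + 2 * (h + 1))%nat ltac:(lia)). unfold r0 in Hpos0. lia. }
    assert (Hp0 : (p <= e n0)%nat).
    { rewrite Hn0. pose proof (Hle 0%nat l0 ltac:(lia)). unfold r0 in Hpos0. lia. }
    specialize (Hc n n0 HpK Hp0). apply Rabs_def2 in Hc. fold f in Hc. lra.
Qed.
Close Scope nat_scope. Open Scope R_scope.

Definition ones : cantor := fun _ => true.
Lemma infones_ones : infones ones.
Proof. intros n; exists n; split; auto. Qed.

Definition Phi (x : cantor) : nat -> Q :=
  if excluded_middle_informative (infones x) then ev x else ev ones.

Lemma Phi_Scc x : in_Scc (Phi x).
Proof.
  unfold Phi. destruct (excluded_middle_informative (infones x)).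
  apply ev_Scc; auto. apply ev_Scc, infones_ones.
Qed.

Lemma T_meagre X : inf_coinf X -> meagre (fun x => sum_on_conv (Phi x) X).
Proof.
  intros HX. exists (fun k x => En k x \/ Nc X k x). split.
  - intros k. apply nd_union. apply En_nd. apply Nc_nd; auto.
  - intros x Hx. unfold Phi in Hx. destruct (excluded_middle_informative (infones x)) as [Hi|Hi].
    + destruct Hx as [e [[Hmono Hen] [l Hl]]]. rewrite qseq_ev in Hl.
      destruct (Hl (1/4) ltac:(lra)) as [N HN].
      exists (e N). right. exists e. split. split; auto.
      intros m1 m2 H1 H2.
      apply strict_mono_le in H1; auto. apply strict_mono_le in H2; auto.
      pose proof (HN m1 H1) as A1. pose proof (HN m2 H2) as A2. unfold Rdist in *.
      apply Rabs_def2 in A1, A2. apply Rabs_def1; lra.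
    + apply not_all_ex_not in Hi as [n Hn]. exists n. left. intros m Hm.
      destruct (x m) eqn:E; auto. exfalso; apply Hn. exists m; auto.
Qed.

Theorem mainTheorem3 :
  (forall (I : Type) (F : I -> nat -> Prop),
      (forall i, inf_coinf (F i)) ->
      (forall a, in_Scc a -> exists i, sum_on_conv a (F i)) ->
      exists Ms : I -> cantor -> Prop,
        (forall i, meagre (Ms i)) /\ (forall x, exists i, Ms i x))
  /\
  (forall (I : Type) (Y : I -> cantor),
      ~ meagre (fun x => exists i, Y i = x) ->
      exists A : I -> nat -> Q,
        (forall i, in_Scc (A i)) /\
        (forall X, inf_coinf X -> exists i, ~ sum_on_conv (A i) X)).
Proof.
  split.
  - intros I F HF HS. exists (fun i x => sum_on_conv (Phi x) (F i)). split.
    + intros i. apply T_meagre; auto.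
    + intros x. apply HS, Phi_Scc.
  - intros I Y HY. exists (fun i => Phi (Y i)). split.
    + intros i; apply Phi_Scc.
    + intros X HX. apply NNPP. intros Hn. apply HY.
      destruct (T_meagre X HX) as [Ns [HNs Hc]]. exists Ns. split; auto.
      intros x [i <-]. apply Hc. apply NNPP. intros Hc'. apply Hn. exists i; auto.
Qed.
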